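(* Consider the noisy Hegselmann–Krause model with heterogeneously prejudiced agents described in the context, with $\epsilon\in(0,1)$, $\alpha\in(0,1]$ and noise bound $\delta\ge0$. For every initial condition $x(0)\in[0,1]^n$, almost surely $$\limsup_{t\to\infty}\max_{i\in\mathcal{S}_1}|x_i(t)-J_1|\le\frac{(1-\alpha)\epsilon+\delta}{\alpha}\quad\text{and}\quad \limsup_{t\to\infty}\max_{i\in\mathcal{S}_2}|x_i(t)-J_2|\le\frac{(1-\alpha)\epsilon+\delta}{\alpha}.$$
   Context: Agents $\mathcal{V}=\{1,\dots,n\}$ with opinions $x_i(t)\in[0,1]$, $t=0,1,2,\dots$. $\mathcal{V}=\mathcal{S}_1\cup\mathcal{S}_2$ with $\mathcal{S}_1\cap\mathcal{S}_2=\emptyset$; agents in $\mathcal{S}_k$ have prejudice value $J_k\in[0,1]$ ($k=1,2$), with $|J_1-J_2|>\epsilon$. Confidence bound $\epsilon$, attraction strength $\alpha\in(0,1]$. Neighbor set $\mathcal{N}_i(x(t))=\{j\in\mathcal{V}:|x_j(t)-x_i(t)|\le\epsilon\}$. For $i\in\mathcal{S}_k$, $x_i^*(t)=(1-\alpha)|\mathcal{N}_i(x(t))|^{-1}\sum_{j\in\mathcal{N}_i(x(t))}x_j(t)+\alpha J_k+\xi_i(t+1)$, and $x_i(t+1)$ equals $1$ if $x_i^*(t)>1$, $x_i^*(t)$ if $x_i^*(t)\in[0,1]$, $0$ if $x_i^*(t)<0$. The noises $\{\xi_i(t)\}_{i\in\mathcal{V},t\ge1}$ are i.i.d. with $E\xi_1(1)=0$,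 $E\xi_1(1)^2>0$ and $|\xi_1(1)|\le\delta$ almost surely. *)

(* Defs.v *)
From Stdlib Require Import Reals Lra List.
Import ListNotations.
Open Scope R_scope.

(* Agents are indexed 0 .. n-1; an opinion profile is a function nat -> R
   (only the values at indices < n matter). *)

Definition nbr_sum (n : nat) (eps : R) (x : nat -> R) (i : nat) : R :=
  fold_right (fun j acc => if Rle_dec (Rabs (x j - x i)) eps then x j + acc else acc)
             0 (seq 0 n).

Definition nbr_card (n : nat) (eps : R) (x : nat -> R) (i : nat) : nat :=
  fold_right (fun j acc => if Rle_dec (Rabs (x j - x i)) eps then S acc else acc)
             O (seq 0 n).

Definition nbr_avg (n : nat) (eps : R) (x : nat -> R) (i : nat) : R :=
  nbr_sum n eps x i / INR (nbr_card n eps x i).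

Definition clip01 (y : R) : R :=
  if Rlt_dec 1 y then 1 else if Rlt_dec y 0 then 0 else y.

(* One step of the noisy HK model with heterogeneous prejudices.
   [inS1 i = true] means i is in S_1, otherwise i is in S_2;
   [xi] is the noise realisation at time t+1. *)
Definition hk_step (n : nat) (eps alpha J1 J2 : R) (inS1 : nat -> bool)
  (x : nat -> R) (xi : nat -> R) (i : nat) : R :=
  clip01 ((1 - alpha) * nbr_avg n eps x i
          + alpha * (if inS1 i then J1 else J2) + xi i).

(* Main.v *)
Require Import Defs.
From Stdlib Require Import Reals Lra Lia List.
Open Scope R_scope.

Lemma abs_le_b (u e : R) : Rabs u <= e -> -e <= u <= e.
Proof. unfold Rabs; destruct Rcase_abs; lra. Qed.

Lemma fold_bounds (eps a : R) (x : nat -> R) (l : list nat) :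
  let Sm := fold_right (fun j acc => if Rle_dec (Rabs (x j - a)) eps then x j + acc else acc) 0 l in
  let C := fold_right (fun j acc => if Rle_dec (Rabs (x j - a)) eps then S acc else acc) O l in
  INR C * (a - eps) <= Sm <= INR C * (a + eps).
Proof.
  induction l as [|j l IH]; simpl in *.
  - lra.
  - destruct (Rle_dec (Rabs (x j - a)) eps) as [r|r].
    + rewrite S_INR. apply abs_le_b in r. destruct IH; destruct r; split; nra.
    + exact IH.
Qed.

Lemma fold_card (eps a : R) (x : nat -> R) (l : list nat) i :
  In i l -> a = x i -> 0 <= eps ->
  (1 <= fold_right (fun j acc => if Rle_dec (Rabs (x j - a)) eps then S acc else acc) O l)%nat.
Proof.
  induction l as [|j l IH]; simpl; [tauto|].
  intros [->|H] Ha He.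
  - destruct Rle_dec as [r|r]; [lia|]. exfalso; apply r. subst. rewrite Rminus_diag, Rabs_R0; lra.
  - destruct Rle_dec; [lia|]. auto.
Qed.

Lemma avg_bounds n eps x i : (i < n)%nat -> 0 <= eps ->
  x i - eps <= nbr_avg n eps x i <= x i + eps.
Proof.
  intros Hi He. unfold nbr_avg, nbr_sum, nbr_card.
  pose proof (fold_bounds eps (x i) x (seq 0 n)) as [H1 H2]. simpl in H1, H2.
  pose proof (fold_card eps (x i) x (seq 0 n) i) as Hc.
  assert (In i (seq 0 n)) by (apply in_seq; lia).
  specialize (Hc H eq_refl He).
  set (C := fold_right _ O _) in *. set (Sm := fold_right _ 0 _) in *.
  apply le_INR in Hc. simpl in Hc.
  split.
  - apply Rmult_le_reg_r with (INR C); [lra|]. unfold Rdiv. rewrite Rmult_assoc, Rinv_l by lra. lra.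
  - apply Rmult_le_reg_r with (INR C); [lra|]. unfold Rdiv. rewrite Rmult_assoc, Rinv_l by lra. lra.
Qed.

Lemma clip_le y J : 0 <= J <= 1 -> Rabs (clip01 y - J) <= Rabs (y - J).
Proof.
  intros HJ. unfold clip01.
  destruct Rlt_dec; [|destruct Rlt_dec];
  unfold Rabs; repeat destruct Rcase_abs; lra.
Qed.

Lemma bound_all (n : nat) (eps alpha delta J : R) (inS1 : nat -> bool) J1 J2
  (xi : nat -> nat -> R) (x : nat -> nat -> R) i :
  0 < eps -> 0 < alpha <= 1 -> 0 <= delta -> 0 <= J <= 1 -> (i < n)%nat ->
  J = (if inS1 i then J1 else J2) ->
  (forall t, Rabs (xi (S t) i) <= delta) ->
  0 <= x 0%nat i <= 1 ->
  (forall t, x (S t) i = hk_step n eps alpha J1 J2 inS1 (x t) (xi (S t)) i) ->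
  forall t, Rabs (x t i - J) <= (1 - alpha) ^ t + ((1 - alpha) * eps + delta) / alpha.
Proof.
  intros He Ha Hd HJ Hi HJe Hxi H0 Hdyn.
  set (c := (1 - alpha) * eps + delta).
  assert (Hc : 0 <= c / alpha).
  { unfold c. apply Rmult_le_pos; [nra|]. left; apply Rinv_0_lt_compat; lra. }
  induction t.
  - simpl. unfold Rabs; destruct Rcase_abs; lra.
  - rewrite Hdyn. unfold hk_step. rewrite <- HJe.
    eapply Rle_trans; [apply clip_le; exact HJ|].
    pose proof (avg_bounds n eps (x t) i Hi ltac:(lra)) as [A1 A2].
    pose proof (Hxi t) as X.
    set (a := nbr_avg n eps (x t) i) in *. set (z := xi (S t) i) in *.
    assert (E : (1 - alpha) ^ S t + c / alpha
               = (1 - alpha) * ((1 - alpha) ^ t + c / alpha) + c).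
    { simpl. field. lra. }
    rewrite E.
    replace ((1 - alpha) * a + alpha * J + z - J)
      with ((1 - alpha) * (x t i - J) + (1 - alpha) * (a - x t i) + z) by ring.
    eapply Rle_trans; [apply Rabs_triang|].
    eapply Rle_trans; [apply Rplus_le_compat_r; apply Rabs_triang|].
    rewrite !Rabs_mult, (Rabs_right (1 - alpha)) by lra.
    assert (Rabs (a - x t i) <= eps) by (unfold Rabs; destruct Rcase_abs; lra).
    assert (P1 : (1 - alpha) * Rabs (x t i - J) <= (1 - alpha) * ((1 - alpha) ^ t + c / alpha))
      by (apply Rmult_le_compat_l; lra).
    assert (P2 : (1 - alpha) * Rabs (a - x t i) <= (1 - alpha) * eps)
      by (apply Rmult_le_compat_l; lra).
    unfold c in *. lra.
Qed.

Lemma pow_small alpha : 0 < alpha <= 1 -> forall eta, 0 < eta ->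
  exists T, forall t, (T <= t)%nat -> (1 - alpha) ^ t <= eta.
Proof.
  intros Ha eta He.
  destruct (pow_lt_1_zero (1 - alpha) ltac:(unfold Rabs; destruct Rcase_abs; lra) eta He) as [N HN].
  exists N. intros t Ht. specialize (HN t ltac:(lia)).
  unfold Rabs in HN; destruct Rcase_abs in HN; [|lra].
  assert (0 <= (1 - alpha) ^ t) by (apply pow_le; lra). lra.
Qed.

Theorem theorem2 (n : nat) (eps alpha delta J1 J2 : R) (inS1 : nat -> bool)
  (xi : nat -> nat -> R) (x : nat -> nat -> R) :
  0 < eps < 1 ->
  0 < alpha <= 1 ->
  0 <= delta ->
  0 <= J1 <= 1 -> 0 <= J2 <= 1 ->
  Rabs (J1 - J2) > eps ->
  (* bounded noise realisation: |xi_i(t)| <= delta for t >= 1 *)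
  (forall t i, (i < n)%nat -> Rabs (xi (S t) i) <= delta) ->
  (* initial condition in [0,1]^n *)
  (forall i, (i < n)%nat -> 0 <= x 0%nat i <= 1) ->
  (* dynamics *)
  (forall t i, (i < n)%nat ->
     x (S t) i = hk_step n eps alpha J1 J2 inS1 (x t) (xi (S t)) i) ->
  (* limsup_{t} max_{i in S_1} |x_i(t) - J_1| <= ((1-alpha) eps + delta)/alpha,
     and likewise for S_2 *)
  (forall eta, 0 < eta -> exists T, forall t i, (T <= t)%nat -> (i < n)%nat ->
     inS1 i = true ->
     Rabs (x t i - J1) <= ((1 - alpha) * eps + delta) / alpha + eta) /\
  (forall eta, 0 < eta -> exists T, forall t i, (T <= t)%nat -> (i < n)%nat ->
     inS1 i = false ->
     Rabs (x t i - J2) <= ((1 - alpha) * eps + delta) / alpha + eta).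
Proof.
  intros He Ha Hd HJ1 HJ2 _ Hxi H0 Hdyn.
  split; intros eta Heta; destruct (pow_small alpha Ha eta Heta) as [T HT];
    exists T; intros t i Ht Hi Hs.
  - pose proof (bound_all n eps alpha delta J1 inS1 J1 J2 xi x i ltac:(lra) Ha Hd HJ1 Hi
      ltac:(rewrite Hs; reflexivity) (fun t => Hxi t i Hi) (H0 i Hi) (fun t => Hdyn t i Hi) t).
    specialize (HT t Ht). lra.
  - pose proof (bound_all n eps alpha delta J2 inS1 J1 J2 xi x i ltac:(lra) Ha Hd HJ2 Hi
      ltac:(rewrite Hs; reflexivity) (fun t => Hxi t i Hi) (H0 i Hi) (fun t => Hdyn t i Hi) t).
    specialize (HT t Ht). lra.
Qed.
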